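(* For all $0<b\le B\le1$ and every integer $n\ge1$, $$\textsc{PoF-Reward-Submodular}(b,B)=\textsc{PoF-Welfare-Submodular}(b,B)=\min\big(\lceil 2B/b\rceil-1,\,n\big)\le\min(2B/b,\,n).$$
   Context: An instance $\langle A,f,c\rangle$ consists of a finite set $A$ of agents, a monotone nondecreasing $f:2^A\to[0,1]$, and costs $c_i\ge0$. For $S\subseteq A$, $i\in S$: $f_S(i)=f(S)-f(S\setminus\{i\})$; $p(S)=\sum_{i\in S}c_i/f_S(i)$ (conventions: $0$ if $c_i=0=f_S(i)$, $\infty$ if $c_i>0=f_S(i)$). $f$ is submodular if $f_S(i)\ge f_{S'}(i)$ whenever $S\subseteq S'$, $i\in S$. For an objective $\varphi$ (assigning to each instance and $S\subseteq A$ a real $\varphi(S)$), $\textsc{Max-}\varphi(B)=\max\{\varphi(S):p(S)\le B\}$ and, for an instance, $\textsc{PoF-}\varphi(b,B)=\textsc{Max-}\varphi(B)/\textsc{Max-}\varphi(b)$. The reward objective is $\varphi(S)=f(S)$ and the welfare objective is $\varphi(S)=f(S)-\sum_{i\in S}c_i$. $\textsc{PoF-Reward-Submodular}(b,B)$ (resp. $\textsc{PoF-Welfare-Submodular}(b,B)$) is the supremum of $\textsc{PoF-}\varphi(b,B)$ for the reward (resp. welfare) objective over all instances with submodular $f$, at most $n$ agents, and $\max_{i\in A}p(\{i\})\le b$. *)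

(* Defs.v *)
From mathcomp Require Import all_boot all_order all_algebra.
From mathcomp Require Import reals constructive_ereal.
Set Implicit Arguments. Unset Strict Implicit. Unset Printing Implicit Defensive.
Import Order.TTheory GRing.Theory Num.Theory.
Local Open Scope ring_scope.

Section Defs.
Variable R : realType.

Definition marg (A : finType) (f : {set A} -> R) (S : {set A}) (i : A) : R :=
  f S - f (S :\ i).

Definition price (A : finType) (f : {set A} -> R) (c : A -> R) (S : {set A}) : \bar R :=
  (\sum_(i in S)
     (if (marg f S i == 0)%R then (if (c i == 0)%R then 0 else +oo) else (c i / marg f S i)%:E))%E.

Definition monotone_set (A : finType) (f : {set A} -> R) :=
  forall S T : {set A}, S \subset T -> f S <= f T.

Definition unit_valued (A : finType) (f : {set A} -> R) :=
  forall S : {set A}, 0 <= f S <= 1.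

Definition submodular (A : finType) (f : {set A} -> R) :=
  forall (S S' : {set A}) (i : A), S \subset S' -> i \in S -> marg f S' i <= marg f S i.

Definition objective := forall (A : finType), ({set A} -> R) -> (A -> R) -> {set A} -> R.

Definition reward : objective := fun A f c S => f S.
Definition welfare : objective := fun A f c S => f S - \sum_(i in S) c i.

(* Max-phi(B) = max { phi(S) : p(S) <= B }  (the empty set is always feasible) *)
Definition MaxPhi (phi : objective) (A : finType) (f : {set A} -> R) (c : A -> R) (B : R) : R :=
  \big[Num.max/phi A f c set0]_(S : {set A} | (price f c S <= B%:E)%E) phi A f c S.

(* the set of values PoF-phi(b,B) over all valid submodular instances with at most n
   agents and max_i p({i}) <= b (instances with Max-phi(b) = 0, i.e. 0/0, are excluded) *)
Definition PoF_values (phi : objective) (n : nat) (b B : R) : R -> Prop :=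
  fun r => exists (A : finType) (f : {set A} -> R) (c : A -> R),
    [/\ (#|A| <= n)%N, unit_valued f, monotone_set f & submodular f] /\
    [/\ (forall i, 0 <= c i),
        (forall i, (price f c [set i] <= b%:E)%E),
        0 < MaxPhi phi f c b &
        r = MaxPhi phi f c B / MaxPhi phi f c b].

Definition is_sup (X : R -> Prop) (v : R) :=
  (forall r, X r -> r <= v) /\ (forall w, w < v -> exists2 r, X r & w < r).

End Defs.

(* Main.v *)
Require Import Defs.
From mathcomp Require Import all_boot all_order all_algebra.
From mathcomp Require Import reals constructive_ereal.
Import Order.TTheory GRing.Theory Num.Theory.
Local Open Scope ring_scope.
From mathcomp Require Import all_boot all_order all_algebra.
From mathcomp Require Import reals constructive_ereal.
From mathcomp Require Import zify.
From mathcomp Require Import ring lra.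
Import Order.TTheory GRing.Theory Num.Theory.
Local Open Scope ring_scope.
Set Implicit Arguments. Unset Strict Implicit.

Section Greedy.
Variables (R : realType) (A : finType) (w : A -> R) (phi : {set A} -> R) (b : R).
Hypothesis Hb : 0 < b.
Hypothesis Hw : forall i, 0 <= w i.
Hypothesis Hphi : forall (G T : {set A}) x, G \subset T -> x \notin T ->
  phi (x |: T) - phi T <= phi (x |: G) - phi G.

Definition W (G : {set A}) := \sum_(i in G) w i.

Lemma sum_gt (l : seq {set A}) (a : R) : l != [::] ->
  (forall G, G \in l -> a < W G) -> (size l)%:R * a < \sum_(G <- l) W G.
Proof.
elim: l => [//|G l IH] _ H.
rewrite big_cons /= -addn1 natrD mulrDl mul1r.
have HG : a < W G by apply: H; rewrite mem_head.
case: l IH H => [|G' l] IH H.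
  by rewrite big_nil /= mul0r add0r addr0.
have := IH isT (fun G0 hG0 => H G0 (@mem_behead _ (G :: G' :: l) _ hG0)).
lra.
Qed.

Lemma greedy (s : seq A) : uniq s -> exists Gs : seq {set A},
 [/\ forall G, G \in Gs -> G \subset [set x in s] /\ ((#|G| == 1)%N || (W G <= b)),
     W [set x in s] = \sum_(G <- Gs) W G,
     phi [set x in s] - phi set0 <= \sum_(G <- Gs) (phi G - phi set0),
     (size Gs <= size s)%N &
     (2 <= size Gs)%N -> (size Gs)%:R * b < 2 * \sum_(G <- Gs) W G].
Proof.
elim: s => [_|x s IH /andP [xs us]].
  exists [::]; split => //.
  - have -> : [set x in [::]] = set0 :> {set A} by apply/setP => y; rewrite !inE.
    by rewrite /W big_set0 big_nil.
  - by rewrite subrr big_nil.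
have [Gs [H1 H2 H3 H4 H5]] := IH us.
set T := [set x in s] in H1 H2 H3 *.
have ET : [set y in x :: s] = x |: T by apply/setP => y; rewrite !inE.
have xT : x \notin T by rewrite inE.
have WT : W (x |: T) = w x + W T by rewrite /W big_setU1.
rewrite ET.
case: (boolP (has (fun G => W G + w x <= b) Gs)) => [/hasP [G GG HG]|/hasPn HG].
  have [GT _] := H1 G GG.
  have xG : x \notin G by apply: contra xT; apply: (subsetP GT).
  have WG : W (x |: G) = w x + W G by rewrite /W big_setU1.
  have PW : forall F : {set A} -> R, \sum_(G0 <- Gs) F G0 = \sum_(G0 <- G :: rem G Gs) F G0.
    by move=> F; apply: perm_big; apply: perm_to_rem.
  exists ((x |: G) :: rem G Gs); split.
  - move=> G'; rewrite inE => /orP [/eqP ->|G'r].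
      split; first by apply: setUS.
      by apply/orP; right; lra.
    have [G'T ->] := H1 G' (mem_rem G'r); split => //.
    by apply: (subset_trans G'T); apply: subsetUr.
  - rewrite big_cons WT WG H2 (PW W) big_cons /=; lra.
  - rewrite big_cons (PW (fun G => phi G - phi set0)) big_cons /= in H3 *.
    have := Hphi (x:=x) GT xT; lra.
  - by rewrite /= size_rem //; case: (size Gs) H4 => //= n; rewrite ltnS => /ltnW.
  - rewrite /= size_rem // big_cons WG (PW W) big_cons /= in H5 *.
    case: (size Gs) H5 => [//|n] /= H5 H2n; have := H5 H2n; have := Hw x; lra.
exists ([set x] :: Gs); split.
- move=> G'; rewrite inE => /orP [/eqP ->|G'r].
    by split; [rewrite sub1set setU11 | rewrite cards1].
  have [G'T ->] := H1 G' G'r; split => //.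
  by apply: (subset_trans G'T); apply: subsetUr.
- by rewrite big_cons WT H2 /W big_set1.
- rewrite big_cons; have := Hphi (x:=x) (sub0set T) xT; rewrite setU0; lra.
- by [].
- have W1 : W [set x] = w x by rewrite /W big_set1.
  rewrite /= big_cons W1 => H2n.
  case: Gs H1 H2 H3 H4 H5 HG H2n => [//|G l] H1 H2 H3 H4 H5 HG _.
  have Hgt := sum_gt (l := G :: l) (a := b - w x) isT
     (fun G0 hG0 => ltac:(have := HG G0 hG0; rewrite -ltNge; lra)).
  set k := size (G :: l) in Hgt H5 *.
  set S := \sum_(G0 <- G :: l) W G0 in Hgt H5 *.
  rewrite -addn1 natrD.
  have [k1|k2] := leqP k 1.
    have k1' : k%:R = 1 :> R.
      by move: k1; rewrite /k /=; case: (size l).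
    rewrite k1' in Hgt *; lra.
  have := H5 k2.
  have k0 : (2%:R <= k%:R :> R) by rewrite ler_nat.
  case: (leP (w x) (b/2)) => hw.
    have : 0 <= (k%:R - 1) * (b - 2 * w x) by apply: mulr_ge0; lra.
    nra.
  lra.
Qed.
End Greedy.

Section Upper.
Variables (R : realType) (A : finType) (f : {set A} -> R) (c : A -> R) (b B : R).
Hypothesis Hmon : monotone_set f.
Hypothesis Hsub : submodular f.
Hypothesis Hunit : unit_valued f.
Hypothesis Hc : forall i, 0 <= c i.
Hypothesis Hsing : forall i, (price f c [set i] <= b%:E)%E.
Hypothesis Hb : 0 < b.

Lemma marg_ge0 S i : 0 <= marg f S i.
Proof. by rewrite /marg subr_ge0; apply: Hmon; apply: subD1set. Qed.

Lemma reward_step (G T : {set A}) x : G \subset T -> x \notin T ->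
  f (x |: T) - f T <= f (x |: G) - f G.
Proof.
move=> GT xT.
have xG : x \notin G by apply: contra xT; apply: (subsetP GT).
have := Hsub (setUS [set x] GT) (setU11 x G).
by rewrite /marg !setU1K.
Qed.

Lemma welfare_step (G T : {set A}) x : G \subset T -> x \notin T ->
  welfare f c (x |: T) - welfare f c T <= welfare f c (x |: G) - welfare f c G.
Proof.
move=> GT xT.
have xG : x \notin G by apply: contra xT; apply: (subsetP GT).
rewrite /welfare !big_setU1 //=.
have := reward_step GT xT; lra.
Qed.

Variable S : {set A}.
Hypothesis HS : (price f c S <= B%:E)%E.

Definition wt i := if marg f S i == 0 then 0 else c i / marg f S i.

Lemma wt_ge0 i : 0 <= wt i.
Proof.
rewrite /wt; case: eqP => // _; apply: divr_ge0 => //; exact: marg_ge0.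
Qed.

Lemma term_ge0 (G : {set A}) i : (0%R <= (if (marg f G i == 0)%R then (if (c i == 0)%R then 0 else +oo) else (c i / marg f G i)%:E))%E.
Proof.
case: eqP => _; first by case: eqP => _; rewrite ?lexx ?le0y.
apply: (@lee_tofin _ 0); apply: divr_ge0 => //; exact: marg_ge0.
Qed.

Lemma term_fin i : i \in S -> marg f S i = 0 -> c i = 0.
Proof.
move=> iS m0; apply/eqP; apply: contraTT HS => ci.
rewrite /price (bigD1 i) //= m0 eqxx (negbTE ci) addye ?leye_eq //.
rewrite gt_eqF // (lt_le_trans (ltNyr 0%R)) //.
by apply: sume_ge0 => j _; exact: term_ge0.
Qed.

Lemma priceS : price f c S = (\sum_(i in S) wt i)%:E.
Proof.
rewrite -sumEFin; apply: eq_bigr => i iS; rewrite /wt.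
case: eqP => // m0; by rewrite (term_fin iS m0) eqxx.
Qed.

Lemma WS_le : \sum_(i in S) wt i <= B.
Proof. by rewrite -lee_fin -priceS. Qed.

Lemma price_sub (G : {set A}) : G \subset S -> (price f c G <= (\sum_(i in G) wt i)%:E)%E.
Proof.
move=> GS; rewrite /price -sumEFin; apply: lee_sum => i iG.
have iS : i \in S by apply: (subsetP GS).
have Hm : marg f S i <= marg f G i by apply: Hsub.
have H0 := marg_ge0 S i.
rewrite /wt; case: (eqVneq (marg f S i) 0) => mS.
  rewrite (term_fin iS mS) eqxx mul0r; case: ifP => _; exact: lexx.
have mS' : 0 < marg f S i by rewrite lt_neqAle eq_sym mS.
have mG : 0 < marg f G i by apply: lt_le_trans Hm.
rewrite (gt_eqF mG) lee_fin; apply: ler_wpM2l => //.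
by rewrite lef_pV2 ?posrE.
Qed.

Lemma sum_const_seq (l : seq {set A}) (a : R) : \sum_(G <- l) a = (size l)%:R * a.
Proof.
elim: l => [|G l IH]; first by rewrite big_nil mul0r.
by rewrite big_cons IH /= -natr1 mulrDl mul1r addrC.
Qed.

Lemma upper_one (phi : {set A} -> R) (Mb : R)
  (Hphi : forall (G T : {set A}) x, G \subset T -> x \notin T ->
     phi (x |: T) - phi T <= phi (x |: G) - phi G)
  (HM : forall G, (price f c G <= b%:E)%E -> phi G <= Mb) :
  exists k : nat, [/\ (k <= #|S|)%N, (2 <= k)%N -> k%:R * b < 2 * B &
     phi S - phi set0 <= k%:R * (Mb - phi set0)].
Proof.
have [Gs [H1 H2 H3 H4 H5]] := greedy b wt_ge0 Hphi (enum_uniq (mem S)).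
rewrite set_enum in H1 H2 H3.
exists (size Gs); split.
- by rewrite cardE.
- move=> k2; have := H5 k2; rewrite -H2 /W; have := WS_le; lra.
- apply: (le_trans H3); rewrite -sum_const_seq !big_seq; apply: ler_sum => G GG.
  rewrite lerD2r; apply: HM.
  have [GS /orP [/cards1P [i ->]|WG]] := H1 G GG; first exact: Hsing.
  apply: (le_trans (price_sub GS)); by rewrite lee_fin.
Qed.

End Upper.



Section Vfacts.
Variables (R : realType) (b B : R) (n : nat).
Hypotheses (Hb : 0 < b) (HbB : b <= B) (HB1 : B <= 1) (Hn : (1 <= n)%N).
Let v : R := Num.min ((Num.ceil (2 * B / b) - 1)%:~R) n%:R.

Lemma two_le : 2 <= 2 * B / b.
Proof. rewrite ler_pdivlMr //. have := Hb; have := HbB; lra. Qed.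

Lemma ceil_ge2 : (2 <= Num.ceil (2 * B / b))%R.
Proof.
have : (1%:Z < Num.ceil (2 * B / b))%R by rewrite ceil_gt_int; have := two_le; lra.
lia.
Qed.

Lemma v_ge1 : 1 <= v.
Proof.
rewrite /v le_min; apply/andP; split; last by rewrite ler1n.
have := ceil_ge2; set C := Num.ceil _ => HC.
have : (1 <= C - 1)%R by lia.
by rewrite -(ler_int R).
Qed.

Lemma k_le_v (k : nat) : (k <= n)%N -> ((2 <= k)%N -> k%:R * b < 2 * B) -> k%:R <= v.
Proof.
move=> kn Hk; rewrite /v le_min; apply/andP; split; last by rewrite ler_nat.
have : (k%:Z <= Num.ceil (2 * B / b) - 1)%R.
  case: (leqP k 1) => k1.
    have := ceil_ge2; lia.
  have : (k%:Z < Num.ceil (2 * B / b))%R.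
    rewrite ceil_gt_int; change ((k%:R : R) < 2 * B / b).
    by rewrite ltr_pdivlMr //; apply: Hk.
  lia.
by rewrite -(ler_int R).
Qed.

Lemma v_le : v <= Num.min (2 * B / b) n%:R.
Proof.
rewrite le_min; apply/andP; split; last by rewrite /v ge_min lexx orbT.
rewrite /v ge_min; apply/orP; left; apply: ltW; exact: ceilB1_lt.
Qed.

Lemma pof_upper (phi : objective R)
  (Hstep : forall (A : finType) (f : {set A} -> R) c, monotone_set f -> submodular f ->
     forall (G T : {set A}) x, G \subset T -> x \notin T ->
     phi A f c (x |: T) - phi A f c T <= phi A f c (x |: G) - phi A f c G)
  (H0 : forall (A : finType) (f : {set A} -> R) c, phi A f c set0 = f set0)
  r : PoF_values phi n b B r -> r <= v.
Proof.
case=> A [f [c [[HA Hu Hm Hs] [Hc Hsing HMb ->]]]].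
set Mb := MaxPhi phi f c b in HMb *.
rewrite ler_pdivrMr //.
have HM : forall G, (price f c G <= b%:E)%E -> phi A f c G <= Mb.
  by move=> G HG; rewrite /Mb /MaxPhi; apply: (le_bigmax_cond _ _ HG).
have p0M : phi A f c set0 <= Mb by apply: HM; rewrite /price big_set0 lee_fin ltW.
have p00 : 0 <= phi A f c set0 by rewrite H0; have := Hu set0 => /andP [].
have v1 := v_ge1.
rewrite /MaxPhi; apply: bigmax_le.
  have : 0 <= (v - 1) * Mb by apply: mulr_ge0; lra.
  nra.
move=> S HS.
have [k [kS k2 Hk]] := upper_one Hm Hs Hc Hsing HS (Hstep A f c Hm Hs) HM.
have kv : k%:R <= v.
  apply: k_le_v => //; apply: (leq_trans _ HA); apply: (leq_trans kS); exact: max_card.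
case: (posnP k) => [k0|kp].
  move: Hk; rewrite k0 mul0r => Hk.
  have : 0 <= (v - 1) * Mb by apply: mulr_ge0; lra.
  nra.
have k1 : 1 <= k%:R :> R by rewrite ler1n.
have : 0 <= (k%:R - 1) * phi A f c set0 by apply: mulr_ge0; lra.
have : 0 <= (v - k%:R) * Mb by apply: mulr_ge0; lra.
nra.
Qed.

End Vfacts.

Section Lower.
Variables (R : realType) (k : nat) (beta b B : R) (n : nat).
Hypotheses (kpos : (0 < k)%N) (Hbeta1 : b / 2 < beta) (Hbeta2 : beta <= b)
  (HkB : k%:R * beta <= B) (Hkn : (k <= n)%N).

Definition alpha : R := k%:R^-1.
Definition fi (S : {set 'I_k}) : R := #|S|%:R * alpha.
Definition ci (i : 'I_k) : R := beta * alpha.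

Lemma alpha_gt0 : 0 < alpha.
Proof. by rewrite /alpha invr_gt0 ltr0n. Qed.

Lemma beta_gt0 : 0 < beta.
Proof.
have := Hbeta1; have : 0 <= b.
  by apply: (le_trans _ Hbeta2); have := Hbeta1; have := Hbeta2; lra.
lra.
Qed.

Lemma marg_inst (S : {set 'I_k}) (i : 'I_k) : i \in S -> marg fi S i = alpha.
Proof.
move=> iS; rewrite /marg /fi (cardsD1 i S) iS /= natrD; ring.
Qed.

Lemma price_inst (S : {set 'I_k}) : price fi ci S = (#|S|%:R * beta)%:E.
Proof.
have a0 := alpha_gt0.
rewrite /price (eq_bigr (fun _ => beta%:E)).
  by rewrite sumEFin sumr_const mulr_natl.
move=> i iS; rewrite marg_inst // (gt_eqF a0) /ci mulfK //; exact: lt0r_neq0.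
Qed.

Lemma card_le_k (S : {set 'I_k}) : (#|S| <= k)%N.
Proof. by rewrite -[X in (_ <= X)%N]card_ord max_card. Qed.

Lemma inst_values (phi : objective R) (g : R) : 0 < g ->
  (forall S : {set 'I_k}, phi _ fi ci S = g * #|S|%:R) ->
  PoF_values phi n b B k%:R.
Proof.
move=> g0 Hphi.
have h1 := Hbeta1; have h2 := Hbeta2; have h3 := HkB.
have a0 := alpha_gt0.
have b0 := beta_gt0.
have kR : 0 < k%:R :> R by rewrite ltr0n.
have Hb : (1 <= k%:R :> R) by rewrite ler1n.
have Mb : MaxPhi phi fi ci b = g.
  apply/eqP; rewrite eq_le; apply/andP; split.
    rewrite /MaxPhi; apply: bigmax_le; first by rewrite Hphi cards0 mulr0 ltW.
    move=> S; rewrite price_inst lee_fin Hphi => HS.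
    have : (#|S| <= 1)%N.
      rewrite leqNgt; apply/negP => H2.
      have : 2%:R <= #|S|%:R :> R by rewrite ler_nat.
      move=> H2'.
      have : 2 * beta <= #|S|%:R * beta by apply: ler_wpM2r; lra.
      lra.
    rewrite -(ler_nat R) => H1.
    have : g * #|S|%:R <= g * 1 by apply: ler_wpM2l; lra.
    by rewrite mulr1.
  have o : 'I_k := Ordinal kpos.
  have -> : g = phi _ fi ci [set o] by rewrite Hphi cards1 mulr1.
  rewrite /MaxPhi; apply: le_bigmax_cond.
  by rewrite price_inst cards1 mul1r lee_fin.
have MB : MaxPhi phi fi ci B = g * k%:R.
  apply/eqP; rewrite eq_le; apply/andP; split.
    rewrite /MaxPhi; apply: bigmax_le.
      by rewrite Hphi cards0 mulr0; apply: mulr_ge0; lra.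
    move=> S _; rewrite Hphi; apply: ler_wpM2l; first lra.
    by rewrite ler_nat card_le_k.
  have -> : g * k%:R = phi _ fi ci setT by rewrite Hphi cardsT card_ord.
  rewrite /MaxPhi; apply: le_bigmax_cond.
  by rewrite price_inst cardsT card_ord lee_fin.
exists 'I_k, fi, ci; split; [split|split].
- by rewrite card_ord.
- move=> S; rewrite /fi; apply/andP; split.
    by apply: mulr_ge0 => //; exact: ltW.
  rewrite /alpha ler_pdivrMr // mul1r ler_nat; exact: card_le_k.
- move=> S T ST; rewrite /fi; apply: ler_wpM2r; first exact: ltW.
  by rewrite ler_nat subset_leq_card.
- move=> S S' i SS' iS; rewrite !marg_inst //; exact: (subsetP SS').
- move=> i; rewrite /ci; apply: mulr_ge0; [exact: ltW | exact: ltW].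
- by move=> i; rewrite price_inst cards1 mul1r lee_fin.
- by rewrite Mb.
- by rewrite MB Mb [g * _]mulrC mulfK //; apply: lt0r_neq0.
Qed.

Lemma reward_inst : PoF_values (@reward R) n b B k%:R.
Proof.
apply: (inst_values alpha_gt0) => S; by rewrite /reward /fi mulrC.
Qed.

Lemma welfare_inst : beta < 1 -> PoF_values (@welfare R) n b B k%:R.
Proof.
move=> b1.
have g0 : 0 < alpha * (1 - beta) by apply: mulr_gt0; [exact: alpha_gt0 | lra].
apply: (inst_values g0) => S.
rewrite /welfare /fi /ci sumr_const -mulr_natl; ring.
Qed.

End Lower.

Theorem mainTheorem11 (R : realType) (b B : R) (n : nat) :
  0 < b -> b <= B -> B <= 1 -> (1 <= n)%N ->
  let v : R := Num.min ((Num.ceil (2 * B / b) - 1)%:~R) n%:R in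
  [/\ is_sup (PoF_values (@reward R) n b B) v,
      is_sup (PoF_values (@welfare R) n b B) v &
      v <= Num.min (2 * B / b) n%:R].
Proof.
move=> Hb HbB HB1 Hn v.
have c2 := ceil_ge2 Hb HbB HB1 Hn.
have glt := ceilB1_lt (2 * B / b).
set C := Num.ceil (2 * B / b).
set m := `|C - 1|%N.
have gm : (m%:Z = C - 1)%R by rewrite /m; lia.
set k := minn m n.
have kv : k%:R = v.
  rewrite /v -gm /k; change ((Posz m)%:~R) with (m%:R : R).
  case: (leqP m n) => mn.
    by apply/esym/min_idPl; rewrite ler_nat.
  by apply/esym/min_idPr; rewrite ler_nat; exact: ltnW.
have kpos : (0 < k)%N by rewrite /k leq_min Hn andbT; lia.
have km : (k <= m)%N by rewrite /k geq_minl.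
have kn : (k <= n)%N by rewrite /k geq_minr.
have kR : 0 < k%:R :> R by rewrite ltr0n.
have kb : k%:R * b < 2 * B.
  rewrite -ltr_pdivlMr //; apply: le_lt_trans glt.
  rewrite -gm; change ((k%:R : R) <= m%:R); by rewrite ler_nat.
set mb := Num.min b (B / k%:R).
have mb1 : b / 2 < mb.
  rewrite /mb lt_min; apply/andP; split; first lra.
  rewrite ltr_pdivlMr //; lra.
have mb2 : mb <= b by rewrite /mb ge_min lexx.
have mb3 : mb <= B / k%:R by rewrite /mb ge_min lexx orbT.
have mb3' : k%:R * mb <= B by rewrite mulrC -ler_pdivlMr.
set beta := (b / 2 + mb) / 2.
have be1 : b / 2 < beta by rewrite /beta; lra.
have be2 : beta <= b by rewrite /beta; lra.
have be3 : k%:R * beta <= B.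
  have : k%:R * beta <= k%:R * mb by apply: ler_wpM2l; [lra | rewrite /beta; lra].
  lra.
have be4 : beta < 1 by rewrite /beta; lra.
split.
- split.
    apply: (pof_upper Hb HbB HB1 Hn) => //.
    by move=> A f c _ Hs G T x; apply: reward_step.
  move=> w wv; exists k%:R; last by rewrite kv.
  exact: (reward_inst kpos be1 be2 be3 kn).
- split.
    apply: (pof_upper Hb HbB HB1 Hn) => //.
      by move=> A f c _ Hs G T x; apply: welfare_step.
    by move=> A f c; rewrite /welfare big_set0 subr0.
  move=> w wv; exists k%:R; last by rewrite kv.
  exact: (welfare_inst kpos be1 be2 be3 kn be4).
- exact: v_le.
Qed.
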